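(* For every prime power $q>2$ there exist $n\ge3$ and an equidistant linear code $\mathcal{U}\subseteq\mathbb{P}_q(n)$ with $|\mathcal{U}|\ge 2^{n+1}$.
   Context: $\mathbb{P}_q(n)$ denotes the set of all subspaces of $\mathbb{F}_q^n$. For subspaces $X,Y$ the subspace distance is $d_S(X,Y)=\dim X+\dim Y-2\dim(X\cap Y)$. A linear code in $\mathbb{P}_q(n)$ is a subset $\mathcal{U}\subseteq\mathbb{P}_q(n)$ with $\{0\}\in\mathcal{U}$ for which there exists a map $\boxplus:\mathcal{U}\times\mathcal{U}\to\mathcal{U}$ such that (i) $(\mathcal{U},\boxplus)$ is an abelian group; (ii) its identity element is $\{0\}$; (iii) $X\boxplus X=\{0\}$ for all $X\in\mathcal{U}$; (iv) $d_S(Y_1\boxplus X,Y_2\boxplus X)=d_S(Y_1,Y_2)$ for all $Y_1,Y_2,X\in\mathcal{U}$. It is equidistant if there is $r$ with $d_S(X,Y)=r$ for all distinct $X,Y\in\mathcal{U}$. *)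

(* Defs.v *)
From mathcomp Require Import all_boot all_order all_algebra.
Set Implicit Arguments. Unset Strict Implicit. Unset Printing Implicit Defensive.
Import GRing.Theory.
Local Open Scope ring_scope.

Definition subspace (F : fieldType) (n : nat) := {vspace 'rV[F]_n}.

Definition dS (F : fieldType) (n : nat) (X Y : subspace F n) : nat :=
  (\dim X + \dim Y - 2 * \dim (X :&: Y))%N.

Definition is_linear_code (F : fieldType) (n : nat) (U : seq (subspace F n)) : Prop :=
  (0%VS \in U) /\
  exists boxplus : subspace F n -> subspace F n -> subspace F n,
    (forall X Y, X \in U -> Y \in U -> boxplus X Y \in U) /\
        (forall X Y Z, X \in U -> Y \in U -> Z \in U ->
            boxplus X (boxplus Y Z) = boxplus (boxplus X Y) Z) /\
        (forall X Y, X \in U -> Y \in U -> boxplus X Y = boxplus Y X) /\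
        (forall X, X \in U -> boxplus X 0%VS = X /\ boxplus 0%VS X = X) /\
        (forall X, X \in U -> exists2 Y, Y \in U & boxplus X Y = 0%VS) /\
        (forall X, X \in U -> boxplus X X = 0%VS) /\
        (forall Y1 Y2 X, Y1 \in U -> Y2 \in U -> X \in U ->
            dS (boxplus Y1 X) (boxplus Y2 X) = dS Y1 Y2).

Definition equidistant (F : fieldType) (n : nat) (U : seq (subspace F n)) : Prop :=
  exists r : nat, forall X Y, X \in U -> Y \in U -> X != Y -> dS X Y = r.

(* Main.v *)
Require Import Defs.
From mathcomp Require Import all_boot all_order all_algebra.
From mathcomp Require Import zify.
Import GRing.Theory.

Section Constr.
Variable F : finFieldType.
Local Open Scope ring_scope.

Definition T := 'rV[bool]_9.

Lemma Txx (x : T) : x + x = 0.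
Proof. by apply/matrixP => i j; rewrite !mxE; case: (x i j). Qed.

Lemma TaddI (a b x : T) : a + x = b + x -> a = b.
Proof.
move=> h; have : a + x + x = b + x + x by rewrite h.
by rewrite -!addrA Txx !addr0.
Qed.

Lemma cardT_le : (#|{: T}| <= #|{: 'rV[F]_6}|)%N -> True. Proof. by []. Qed.

Hypothesis F3 : (2 < #|F|)%N.

Lemma card_le : (#|{: T}| <= #|{: 'rV[F]_6}|)%N.
Proof.
rewrite !card_mx card_bool.
apply: (@leq_trans (3 ^ 6)) => //.
by rewrite leq_exp2r.
Qed.

Definition enc (t : T) : 'rV[F]_6 := enum_val (widen_ord card_le (enum_rank t)).

Lemma enc_inj : injective enc.
Proof.
move=> a b /enum_val_inj /(congr1 val) /= h.
by apply: enum_rank_inj; apply: val_inj.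
Qed.

Definition e0 : 'rV[F]_8 := \row_(i < 8) (i == 0 :> nat)%:R.
Definition vec (w : 'rV[F]_6) : 'rV[F]_8 :=
  \row_(i < 8) (if i == 0 :> nat then 0 else if i == 1 :> nat then 1
                else w 0 (inord (i - 2))).

Definition A (w : 'rV[F]_6) : subspace F 8 := (<[e0]> + <[vec w]>)%VS.

Lemma e0_neq0 : e0 != 0.
Proof.
apply/eqP => /matrixP /(_ 0 (inord 0)); rewrite !mxE inordK //= => /eqP.
by rewrite oner_eq0.
Qed.

Lemma vec_notin w : vec w \notin <[e0]>%VS.
Proof.
apply/vlineP => -[k /matrixP /(_ 0 (inord 1))]; rewrite !mxE inordK //= ?mulr0n mulr0.
by move/eqP; rewrite oner_eq0.
Qed.

Lemma dim_e0 : \dim <[e0]> = 1%N.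
Proof. by rewrite dim_vline e0_neq0. Qed.

Lemma dimA w : \dim (A w) = 2%N.
Proof.
have h := dimv_sum_cap <[e0]> <[vec w]>.
have vn0 : vec w != 0 by apply: contraNneq (vec_notin w) => ->; rewrite mem0v.
rewrite dim_e0 dim_vline vn0 in h.
suff : \dim (<[e0]> :&: <[vec w]>) = 0%N by rewrite /A; move=> z; rewrite z addn0 in h.
have sub : (<[e0]> :&: <[vec w]> <= <[vec w]>)%VS by apply: capvSr.
have dv : \dim <[vec w]> = 1%N by rewrite dim_vline vn0.
have := dimv_leqif_eq sub; rewrite dv.
case=> le1 eqc.
case: (ltngtP (\dim (<[e0]> :&: <[vec w]>)) 1) => //.
- by rewrite ltnS leqn0 => /eqP.
- by move=> c; move: le1; rewrite leqNgt c.
- move=> c; move: eqc; rewrite c eqxx => /esym/eqP hc.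
  have : vec w \in (<[e0]> :&: <[vec w]>)%VS by rewrite hc memv_line.
  by rewrite memv_cap (negPf (vec_notin w)).
Qed.

Lemma A_inj : injective A.
Proof.
move=> w w' h.
have : vec w' \in A w by rewrite h; apply/memv_addP; exists 0; rewrite ?mem0v //;
  exists (vec w'); rewrite ?memv_line ?add0r.
case/memv_addP => u /vlineP [a ->] [v /vlineP [b ->]] /matrixP E.
have hb : b = 1.
  by move: (E 0 (inord 1)); rewrite !mxE inordK //= ?mulr0n mulr0 add0r mulr1.
apply/matrixP => i j; rewrite (ord1 i).
move: (E 0 (inord (j + 2))); rewrite !mxE inordK; last by case: j => j /= /ltP; lia.
have -> : (inord (j + 2 - 2) : 'I_6) = j by apply: val_inj; rewrite /= addnK inordK.
rewrite !addn2 /= hb mul1r ?mulr0n mulr0 add0r.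
by [].
Qed.

Definition g (t : T) : subspace F 8 := if t == 0 then 0%VS else A (enc t).

Lemma g0 : g 0 = 0%VS.
Proof. by rewrite /g eqxx. Qed.

Lemma dimg t : \dim (g t) = if t == 0 then 0%N else 2%N.
Proof. by rewrite /g; case: eqP => _; rewrite ?dimv0 ?dimA. Qed.

Lemma g_inj : injective g.
Proof.
move=> a b; rewrite /g.
case: (eqVneq a 0) => [->|a0]; case: (eqVneq b 0) => [->|b0] //.
- by move/(congr1 (fun X => \dim X)); rewrite dimv0 dimA.
- by move/(congr1 (fun X => \dim X)); rewrite dimv0 dimA.
- by move/A_inj/enc_inj.
Qed.

Lemma dSg a b : dS (g a) (g b) = if a == b then 0%N else 2%N.
Proof.
rewrite /dS; case: (eqVneq a b) => [->|ab].
  by rewrite capvv; lia.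
case: (eqVneq a 0) => [a0|a0].
  subst a; rewrite g0 cap0v !dimv0 dimg.
  by move: ab; rewrite eq_sym => /negPf ->.
case: (eqVneq b 0) => [b0|b0].
  by subst b; rewrite g0 capv0 !dimv0 dimg (negPf a0).
rewrite !dimg (negPf a0) (negPf b0).
suff -> : \dim (g a :&: g b) = 1%N by [].
rewrite /g (negPf a0) (negPf b0).
have ne : A (enc a) != A (enc b) by apply: contra_neq ab => /A_inj/enc_inj.
have sub : (A (enc a) :&: A (enc b) <= A (enc a))%VS by apply: capvSl.
have := dimv_leqif_eq sub; rewrite dimA; case=> le2 eqc.
have ge1 : (1 <= \dim (A (enc a) :&: A (enc b)))%N.
  have hs : (<[e0]> <= A (enc a) :&: A (enc b))%VS.
    by rewrite subv_cap !addvSl.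
  by have := dimvS hs; rewrite dim_e0.
case: (ltngtP (\dim (A (enc a) :&: A (enc b))) 2) => //.
- by lia.
- by move=> c; move: le2; rewrite leqNgt c.
- move=> /eqP; rewrite eqc => /eqP hc.
  have := capvSr (A (enc a)) (A (enc b)); rewrite hc => sab.
  have := dimv_leqif_eq sab; rewrite !dimA; case=> _; rewrite eqxx => /esym/eqP.
  by move=> e; rewrite e eqxx in ne.
Qed.

Definition ginv (X : subspace F 8) : T := odflt 0 [pick t | g t == X].

Lemma ginvK t : ginv (g t) = t.
Proof.
rewrite /ginv; case: pickP => [t' /eqP /g_inj //|/(_ t)]; by rewrite eqxx.
Qed.

Definition bp (X Y : subspace F 8) : subspace F 8 := g (ginv X + ginv Y).

Lemma bpg a b : bp (g a) (g b) = g (a + b).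
Proof. by rewrite /bp (ginvK a) (ginvK b). Qed.

Definition U := map g (enum {: T}).

Lemma inU X : X \in U -> exists t, X = g t.
Proof. by case/mapP => t _ ->; exists t. Qed.

Lemma gU t : g t \in U.
Proof. by apply: map_f; rewrite mem_enum. Qed.


End Constr.

Theorem corollary3 (F : finFieldType) :
  (2 < #|F|)%N ->
  exists (n : nat) (U : seq (subspace F n)),
    [/\ (3 <= n)%N, uniq U, is_linear_code U, equidistant U
      & (2 ^ n.+1 <= size U)%N].
Proof.
move=> F3; exists 8, (U F F3); split.
- by [].
- rewrite map_inj_uniq ?enum_uniq //; exact: g_inj.
- split; first by rewrite -(g0 F F3); exact: gU.
  exists (bp F F3).
  split; first by move=> X Y /inU[x ->] /inU[y ->]; rewrite bpg; exact: gU.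
  split.
    move=> X Y Z /inU[x ->] /inU[y ->] /inU[z ->].
    by rewrite (bpg F F3 y z) (bpg F F3 x (y + z)%R) (bpg F F3 x y) (bpg F F3 (x + y)%R z) addrA.
  split.
    by move=> X Y /inU[x ->] /inU[y ->]; rewrite (bpg F F3 x y) (bpg F F3 y x) addrC.
  split.
    move=> X /inU[x ->]; rewrite -(g0 F F3) (bpg F F3 x 0%R) (bpg F F3 0%R x) addr0 add0r.
    by split.
  split.
    move=> X /inU[x ->]; exists (g F F3 x); first exact: gU.
    by rewrite (bpg F F3 x x) Txx g0.
  split.
    by move=> X /inU[x ->]; rewrite (bpg F F3 x x) Txx g0.
  move=> Y1 Y2 X /inU[a ->] /inU[b ->] /inU[x ->].
  rewrite (bpg F F3 a x) (bpg F F3 b x) (dSg F F3 a b) (dSg F F3 (a + x)%R (b + x)%R).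
  case: (eqVneq a b) => [->|ab]; first by rewrite eqxx.
  case: eqP => [/TaddI e|_]; last by [].
  by rewrite e eqxx in ab.
- exists 2%N => X Y /inU[a ->] /inU[b ->] ne.
  rewrite (dSg F F3 a b); case: eqP => [e|_]; last by [].
  by rewrite e eqxx in ne.
- rewrite size_map -cardE card_mx card_bool mul1n; by [].
Qed.
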